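(* For every $P\in\Delta_{BD}$ and every $\varepsilon>0$ there exists a finite partition $\{C_1,\dots,C_n\}$ of $\Omega$ such that each $C_i$ is a cylinder and $P(C_i)\le\varepsilon$ for each $i$.
   Context: Let $\Omega=\{0,1\}^{\mathbb N}$; $\omega^t$ is the cylinder of paths agreeing with $\omega$ in the first $t$ coordinates (cylinders have varying lengths). $\Sigma$ is a fixed $\sigma$-algebra containing all cylinders; $\mathbb P$ the finitely additive probabilities on $(\Omega,\Sigma)$. $P$ is strongly nonatomic if for every $E\in\Sigma$, $\alpha\in[0,1]$ there is $F\in\Sigma$, $F\subseteq E$, $P(F)=\alpha P(E)$. $R(E\mid\omega^t)=R(E\cap\omega^t)/R(\omega^t)$ when $R(\omega^t)>0$. $P$ merges with $Q$ if for every $\varepsilon>0$, $Q(\{\omega:\sup_{E\in\Sigma}|P(E\mid\omega^t)-Q(E\mid\omega^t)|>\varepsilon\})\to0$ as $t\to\infty$ (cylinders with $Q(\omega^t)>0=P(\omega^t)$ counted in the set). $Q\ll P$: $P(E_n)\to0$ implies $Q(E_n)\to0$ for every sequence in $\Sigma$. $\Delta_{BD}$ is the set of strongly nonatomic $P\in\mathbb P$ that merge with every $Q\in\mathbb P$ with $Q\ll P$. *)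

(* Defs.v *)
From Stdlib Require Export Reals.
Open Scope R_scope.

Definition Omega := nat -> bool.
Definition event := Omega -> Prop.

Definition fullset : event := fun _ => True.
Definition inter (E F : event) : event := fun w => E w /\ F w.
Definition union (E F : event) : event := fun w => E w \/ F w.
Definition compl (E : event) : event := fun w => ~ E w.
Definition subset (E F : event) : Prop := forall w, E w -> F w.
Definition disjoint (E F : event) : Prop := forall w, E w -> F w -> False.

Definition cyl (omega : Omega) (t : nat) : event :=
  fun w => forall i, (i < t)%nat -> w i = omega i.

Definition is_cylinder (C : event) : Prop := exists omega t, C = cyl omega t.

Definition is_sigma_algebra (Sigma : event -> Prop) : Prop :=
  Sigma fullset /\
  (forall E, Sigma E -> Sigma (compl E)) /\
  (forall En : nat -> event, (forall n, Sigma (En n)) ->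
      Sigma (fun w => exists n, En n w)).

Definition contains_cylinders (Sigma : event -> Prop) : Prop :=
  forall omega t, Sigma (cyl omega t).

(* Finitely additive probability on (Omega, Sigma); values outside Sigma are
   irrelevant. *)
Definition is_fap (Sigma : event -> Prop) (P : event -> R) : Prop :=
  P fullset = 1 /\
  (forall E, Sigma E -> 0 <= P E) /\
  (forall E F, Sigma E -> Sigma F -> disjoint E F -> P (union E F) = P E + P F).

Definition strongly_nonatomic (Sigma : event -> Prop) (P : event -> R) : Prop :=
  forall E, Sigma E -> forall alpha, 0 <= alpha <= 1 ->
    exists F, Sigma F /\ subset F E /\ P F = alpha * P E.

(* R(E | omega^t) = R(E /\ omega^t) / R(omega^t)  (used when R(omega^t) > 0). *)
Definition cond (Rm : event -> R) (E : event) (omega : Omega) (t : nat) : R :=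
  Rm (inter E (cyl omega t)) / Rm (cyl omega t).

(* The set { omega : sup_{E in Sigma} |P(E|omega^t) - Q(E|omega^t)| > eps },
   with cylinders where Q(omega^t) > 0 = P(omega^t) counted in the set.
   (Cylinders with Q(omega^t) = 0 are Q-null and are left out.) *)
Definition bad_set (Sigma : event -> Prop) (P Q : event -> R) (eps : R) (t : nat)
  : event :=
  fun omega => Q (cyl omega t) > 0 /\
    (P (cyl omega t) = 0 \/
     exists E, Sigma E /\ Rabs (cond P E omega t - cond Q E omega t) > eps).

Definition merges (Sigma : event -> Prop) (P Q : event -> R) : Prop :=
  forall eps, eps > 0 -> Un_cv (fun t => Q (bad_set Sigma P Q eps t)) 0.

Definition abs_cont (Sigma : event -> Prop) (Q P : event -> R) : Prop :=
  forall En : nat -> event, (forall n, Sigma (En n)) ->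
    Un_cv (fun n => P (En n)) 0 -> Un_cv (fun n => Q (En n)) 0.

Definition Delta_BD (Sigma : event -> Prop) (P : event -> R) : Prop :=
  is_fap Sigma P /\ strongly_nonatomic Sigma P /\
  (forall Q, is_fap Sigma Q -> abs_cont Sigma Q P -> merges Sigma P Q).

(* Main.v *)
Require Import Defs.
From Stdlib Require Import Reals Lra Lia Classical ClassicalEpsilon ClassicalDescription FunctionalExtensionality PropExtensionality.
Open Scope R_scope.

Lemma ev_ext (E F : event) : (forall w, E w <-> F w) -> E = F.
Proof. intros H; apply functional_extensionality; intro w; apply propositional_extensionality; auto. Qed.

Lemma cyl_ext a b t : (forall i, (i < t)%nat -> a i = b i) -> cyl a t = cyl b t.
Proof. intros H; apply ev_ext; intros w; unfold cyl; split; intros Hw i Hi;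
  rewrite Hw by auto; [apply H|symmetry; apply H]; auto. Qed.

Lemma cyl_self w t : cyl w t w.
Proof. intros i _; reflexivity. Qed.

Lemma cyl_mono w s t : (t <= s)%nat -> subset (cyl w s) (cyl w t).
Proof. intros Hts v Hv i Hi; apply Hv; lia. Qed.

Section Sig.
Variable Sigma : event -> Prop.
Hypothesis hS : is_sigma_algebra Sigma.

Lemma sig_union E F : Sigma E -> Sigma F -> Sigma (union E F).
Proof.
  destruct hS as [_ [_ hU]]. intros HE HF.
  replace (union E F) with (fun w => exists n, (match n with 0%nat => E | _ => F end) w).
  - apply hU; intros [|n]; auto.
  - apply ev_ext; intros w; unfold union; split.
    + intros [[|n] H]; auto.
    + intros [H|H]; [exists 0%nat | exists 1%nat]; auto.
Qed.

Lemma sig_compl E : Sigma E -> Sigma (compl E).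
Proof. destruct hS as [_ [hC _]]; auto. Qed.

Lemma sig_inter E F : Sigma E -> Sigma F -> Sigma (inter E F).
Proof.
  intros HE HF.
  replace (inter E F) with (compl (union (compl E) (compl F))).
  - apply sig_compl, sig_union; apply sig_compl; auto.
  - apply ev_ext; intros w; unfold compl, union, inter; tauto.
Qed.

Variable Pm : event -> R.
Hypothesis hP : is_fap Sigma Pm.

Lemma fap_split E F : Sigma E -> Sigma F ->
  Pm E = Pm (inter E F) + Pm (inter E (compl F)).
Proof.
  intros HE HF. destruct hP as [_ [_ hA]].
  rewrite <- hA.
  - f_equal; apply ev_ext; intros w; unfold union, inter, compl; tauto.
  - apply sig_inter; auto.
  - apply sig_inter; auto using sig_compl.
  - intros w [_ H1] [_ H2]; auto.
Qed.

Lemma fap_mono E F : Sigma E -> Sigma F -> subset E F -> Pm E <= Pm F.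
Proof.
  intros HE HF Hs. rewrite (fap_split F E HF HE).
  replace (inter F E) with E.
  - destruct hP as [_ [hN _]]. assert (0 <= Pm (inter F (compl E))).
    { apply hN, sig_inter; auto using sig_compl. } lra.
  - apply ev_ext; intros w; unfold inter; split; auto; tauto.
Qed.
End Sig.

Lemma dec_conv (u : nat -> R) : (forall n, u (S n) <= u n) -> (forall n, 0 <= u n) ->
  exists l, Un_cv u l.
Proof.
  intros Hd H0. destruct (decreasing_cv u Hd) as [l Hl].
  - exists 0. intros x [i ->]. unfold opp_seq. specialize (H0 i). lra.
  - exists l; auto.
Qed.

Lemma dec_le (u : nat -> R) n : (forall n, u (S n) <= u n) -> forall m, (n <= m)%nat -> u m <= u n.
Proof. intros Hd m Hm; induction Hm; [lra|]. specialize (Hd m); lra. Qed.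

Lemma lim_ge (u : nat -> R) l c N : Un_cv u l -> (forall n, (N <= n)%nat -> c <= u n) -> c <= l.
Proof.
  intros Hl Hc. destruct (Rle_or_lt c l); auto.
  destruct (Hl (c - l)) as [M HM]; [lra|].
  specialize (HM (max N M) ltac:(lia)). specialize (Hc (max N M) ltac:(lia)).
  unfold R_dist in HM. apply Rabs_def2 in HM. lra.
Qed.

Lemma lim_le (u : nat -> R) l c N : Un_cv u l -> (forall n, (N <= n)%nat -> u n <= c) -> l <= c.
Proof.
  intros Hl Hc. destruct (Rle_or_lt l c); auto.
  destruct (Hl (l - c)) as [M HM]; [lra|].
  specialize (HM (max N M) ltac:(lia)). specialize (Hc (max N M) ltac:(lia)).
  unfold R_dist in HM. apply Rabs_def2 in HM. lra.
Qed.

Lemma dec_lim_le (u : nat -> R) l : (forall n, u (S n) <= u n) -> Un_cv u l -> forall n, l <= u n.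
Proof. intros Hd Hl n. apply (lim_le u l (u n) n Hl). intros m Hm; apply dec_le; auto. Qed.

Lemma cv_event (u v : nat -> R) l N : Un_cv u l -> (forall n, (N <= n)%nat -> v n = u n) -> Un_cv v l.
Proof.
  intros Hl Hv e He. destruct (Hl e He) as [M HM]. exists (max N M).
  intros n Hn. rewrite Hv by lia. apply HM; lia.
Qed.

Definition lim (u : nat -> R) : R := epsilon (inhabits 0) (fun l => Un_cv u l).

Lemma lim_spec u l : Un_cv u l -> lim u = l.
Proof.
  intros H. unfold lim. apply (UL_sequence u).
  - apply (epsilon_spec (inhabits 0) (fun l => Un_cv u l)). eauto.
  - auto.
Qed.

Fixpoint code (w : Omega) (N : nat) : nat :=
  match N with 0 => 0%nat | S N' => (2 * code (fun k => w (S k)) N' + Nat.b2n (w 0%nat))%nat end.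

Lemma code_spec N : forall w, (code w N < 2 ^ N)%nat /\
  forall k, (k < N)%nat -> Nat.testbit (code w N) k = w k.
Proof.
  induction N as [|N IH]; intros w; cbn [code].
  - split; [simpl; lia | intros; lia].
  - destruct (IH (fun k => w (S k))) as [H1 H2]. split.
    + rewrite Nat.pow_succ_r'. destruct (w 0%nat); simpl Nat.b2n; lia.
    + intros [|k] Hk.
      * destruct (w 0%nat); simpl. apply Nat.testbit_odd_0. rewrite Nat.add_0_r; apply Nat.testbit_even_0.
      * destruct (w 0%nat); simpl Nat.b2n.
        -- change (S k) with (Nat.succ k). rewrite Nat.testbit_odd_succ by lia. apply H2; lia.
        -- change (S k) with (Nat.succ k). rewrite Nat.add_0_r, Nat.testbit_even_succ by lia. apply H2; lia.
Qed.

Lemma tb_high i N k : (i < 2 ^ N)%nat -> (N <= k)%nat -> Nat.testbit i k = false.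
Proof.
  intros Hi Hk. destruct (Nat.eq_dec i 0) as [->|Hne]; [apply Nat.bits_0|].
  apply Nat.bits_above_log2. apply Nat.log2_lt_pow2 in Hi; lia.
Qed.

Lemma partition_exists (P : event -> R) eps N :
  (forall w, P (cyl w N) <= eps) ->
  exists (n : nat) (C : nat -> event),
    (forall i, (i < n)%nat -> is_cylinder (C i)) /\
    (forall i j, (i < n)%nat -> (j < n)%nat -> i <> j -> disjoint (C i) (C j)) /\
    (forall w, exists i, (i < n)%nat /\ C i w) /\
    (forall i, (i < n)%nat -> P (C i) <= eps).
Proof.
  intros H. exists (2 ^ N)%nat, (fun i => cyl (Nat.testbit i) N). split; [|split; [|split]].
  - intros i _; exists (Nat.testbit i), N; reflexivity.
  - intros i j Hi Hj Hij w H1 H2. apply Hij, Nat.bits_inj. intros k.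
    destruct (Nat.lt_ge_cases k N) as [Hk|Hk].
    + rewrite <- (H1 k Hk), (H2 k Hk); auto.
    + rewrite (tb_high i N k), (tb_high j N k); auto.
  - intros w. destruct (code_spec N w) as [H1 H2]. exists (code w N); split; auto.
    intros k Hk; symmetry; auto.
  - intros i _; apply H.
Qed.

Section Konig.
Variable P : event -> R.
Variable eps : R.
Hypothesis Hmono : forall w t N, (t <= N)%nat -> P (cyl w N) <= P (cyl w t).

Definition extb (v : Omega) (t : nat) : Prop :=
  forall N, (t <= N)%nat -> exists w, cyl v t w /\ P (cyl w N) > eps.

Definition upd (v : Omega) (t : nat) (b : bool) : Omega :=
  fun i => if Nat.eqb i t then b else v i.

Lemma ext_step v t : extb v t -> extb (upd v t true) (S t) \/ extb (upd v t false) (S t).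
Proof.
  intros H. apply NNPP; intros Hn. apply not_or_and in Hn as [H1 H2].
  unfold extb in H1, H2.
  apply not_all_ex_not in H1 as [N1 H1]. apply not_all_ex_not in H2 as [N2 H2].
  apply imply_to_and in H1 as [HN1 H1]. apply imply_to_and in H2 as [HN2 H2].
  destruct (H (max N1 N2) ltac:(lia)) as [w [Hw Hp]].
  assert (Hag : forall b, w t = b -> cyl (upd v t b) (S t) w).
  { intros b Hb i Hi. unfold upd. destruct (Nat.eqb_spec i t); subst; auto. apply Hw; lia. }
  destruct (w t) eqn:Ew.
  - apply H1. exists w; split; auto. pose proof (Hmono w N1 (max N1 N2) ltac:(lia)); lra.
  - apply H2. exists w; split; auto. pose proof (Hmono w N2 (max N1 N2) ltac:(lia)); lra.
Qed.

Definition chooseb (v : Omega) (t : nat) : bool :=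
  if excluded_middle_informative (extb (upd v t true) (S t)) then true else false.

Fixpoint node (t : nat) : Omega :=
  match t with 0%nat => (fun _ => false) | S t' => upd (node t') t' (chooseb (node t') t') end.

Lemma node_ext (H0 : extb (fun _ => false) 0) t : extb (node t) t.
Proof.
  induction t as [|t IH]; simpl; auto.
  unfold chooseb. destruct (excluded_middle_informative _); auto.
  destruct (ext_step _ _ IH); tauto.
Qed.

Lemma node_stable t : forall t', (t <= t')%nat -> forall i, (i < t)%nat -> node t' i = node t i.
Proof.
  intros t' Ht. induction Ht; intros i Hi; auto.
  simpl. unfold upd. destruct (Nat.eqb_spec i m); [lia|]. auto.
Qed.

Lemma konig : (forall N, exists w, P (cyl w N) > eps) ->
  exists om, forall t, P (cyl om t) > eps.
Proof.
  intros H. assert (H0 : extb (fun _ => false) 0).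
  { intros N _. destruct (H N) as [w Hw]. exists w; split; auto. intros i Hi; lia. }
  exists (fun i => node (S i) i). intros t.
  destruct (node_ext H0 t t ltac:(lia)) as [w [Hw Hp]].
  replace (cyl (fun i => node (S i) i) t) with (cyl w t); auto.
  apply cyl_ext. intros i Hi. rewrite Hw by auto.
  apply (node_stable (S i) t); lia.
Qed.
End Konig.

Section Main.
Variable Sigma : event -> Prop.
Hypothesis hS : is_sigma_algebra Sigma.
Hypothesis hcyl : contains_cylinders Sigma.
Variable P : event -> R.
Hypothesis hfap : is_fap Sigma P.
Variable om : Omega.
Variable G : event.
Variables (t1 : nat) (delta : R).
Hypothesis hdcv : Un_cv (fun t => P (cyl om t)) delta.
Hypothesis hdpos : delta > 0.
Hypothesis ht1 : P (cyl om t1) < 3/2 * delta.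
Hypothesis hG : Sigma G.
Hypothesis hGsub : subset G (cyl om t1).
Hypothesis hGP : P G = 1/2 * P (cyl om t1).
Hypothesis hmerge : forall Q, is_fap Sigma Q -> abs_cont Sigma Q P -> merges Sigma P Q.

Lemma sig_full : Sigma fullset.
Proof. destruct hS; auto. Qed.

Lemma useq_dec : forall n, P (cyl om (S n)) <= P (cyl om n).
Proof. intros n; apply (fap_mono Sigma hS P hfap); auto. apply cyl_mono; lia. Qed.

Lemma delta_le t : delta <= P (cyl om t).
Proof. apply (dec_lim_le (fun t => P (cyl om t))); auto. exact useq_dec. Qed.

Definition seqE (E : event) (s : nat) : R := P (inter (inter E G) (cyl om s)).
Definition nu (E : event) : R := lim (seqE E).

Lemma sig_seq E s : Sigma E -> Sigma (inter (inter E G) (cyl om s)).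
Proof. intros; apply (sig_inter Sigma hS); auto. apply (sig_inter Sigma hS); auto. Qed.

Lemma nu_cv E : Sigma E -> Un_cv (seqE E) (nu E).
Proof.
  intros HE. destruct (dec_conv (seqE E)) as [l Hl].
  - intros n; unfold seqE; apply (fap_mono Sigma hS P hfap); try apply sig_seq; auto.
    intros w [H1 H2]; split; auto. apply (cyl_mono om (S n) n); auto.
  - intros n; destruct hfap as [_ [hN _]]; apply hN, sig_seq; auto.
  - unfold nu; rewrite (lim_spec _ l Hl); auto.
Qed.

Lemma nu_bounds E : Sigma E -> 0 <= nu E <= P E.
Proof.
  intros HE. split.
  - apply (lim_ge (seqE E) _ 0 0%nat (nu_cv E HE)). intros n _.
    destruct hfap as [_ [hN _]]; apply hN, sig_seq; auto.
  - apply (lim_le (seqE E) _ (P E) 0%nat (nu_cv E HE)). intros n _.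
    apply (fap_mono Sigma hS P hfap); try apply sig_seq; auto.
    intros w [[H _] _]; auto.
Qed.

Lemma full_lb s : (t1 <= s)%nat -> delta / 4 <= seqE fullset s.
Proof.
  intros Hs. unfold seqE.
  replace (inter (inter fullset G) (cyl om s)) with (inter (cyl om s) G)
    by (apply ev_ext; intros w; unfold inter, fullset; tauto).
  pose proof (fap_split Sigma hS P hfap (cyl om s) G (hcyl _ _) hG) as E1.
  pose proof (fap_split Sigma hS P hfap (cyl om t1) G (hcyl _ _) hG) as E2.
  replace (inter (cyl om t1) G) with G in E2
    by (apply ev_ext; intros w; unfold inter; split; [intros H; split; auto | tauto]).
  assert (M : P (inter (cyl om s) (compl G)) <= P (inter (cyl om t1) (compl G))).
  { pose proof (sig_compl Sigma hS G hG).
    apply (fap_mono Sigma hS P hfap); [apply (sig_inter Sigma hS); auto | apply (sig_inter Sigma hS); auto |].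
    intros w [H1 H2]; split; auto. apply (cyl_mono om s t1); auto. }
  pose proof (delta_le s). lra.
Qed.

Definition L := nu fullset.

Lemma L_pos : L > 0.
Proof.
  assert (delta / 4 <= L).
  { apply (lim_ge (seqE fullset) _ _ t1 (nu_cv fullset sig_full)). apply full_lb. }
  lra.
Qed.

Definition Q (E : event) : R := nu E / L.

Lemma Q_one X t : (forall w, G w -> cyl om t w -> X w) -> Q X = 1.
Proof.
  intros HX. unfold Q.
  assert (nu X = L) as ->.
  { apply lim_spec. apply (cv_event (seqE fullset) _ _ t (nu_cv fullset sig_full)).
    intros n Hn; unfold seqE; f_equal. apply ev_ext; intros w; unfold inter, fullset.
    split; [tauto|]. intros [[_ HG] Hc]; repeat split; auto. apply HX; auto.
    apply (cyl_mono om n t); auto. }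
  pose proof L_pos. field. lra.
Qed.

Lemma Q_fap : is_fap Sigma Q.
Proof.
  split; [|split].
  - apply (Q_one fullset 0%nat). intros; exact I.
  - intros E HE. unfold Q. destruct (nu_bounds E HE). pose proof L_pos.
    apply Rmult_le_pos; auto. left; apply Rinv_0_lt_compat; auto.
  - intros E F HE HF Hd. unfold Q.
    assert (nu (union E F) = nu E + nu F) as ->.
    { apply lim_spec. apply (cv_event (fun i => seqE E i + seqE F i) _ _ 0%nat).
      - apply CV_plus; apply nu_cv; auto.
      - intros n _. unfold seqE. destruct hfap as [_ [_ hA]]. rewrite <- hA.
        + f_equal; apply ev_ext; intros w; unfold inter, union; tauto.
        + apply sig_seq; auto.
        + apply sig_seq; auto.
        + intros w [[H1 _] _] [[H2 _] _]; apply (Hd w); auto. }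
    unfold Rdiv; ring.
Qed.

Lemma Q_ac : abs_cont Sigma Q P.
Proof.
  intros En HEn Hcv e He. pose proof L_pos.
  destruct (Hcv (e * L)) as [N HN]; [apply Rmult_lt_0_compat; lra|].
  exists N. intros n Hn. specialize (HN n Hn). unfold R_dist in *.
  rewrite Rminus_0_r in *. apply Rabs_def2 in HN.
  destruct (nu_bounds (En n) (HEn n)) as [B1 B2].
  unfold Q. set (q := nu (En n) / L).
  assert (Hq : q * L = nu (En n)) by (unfold q; field; lra).
  assert (0 <= q) by nra.
  rewrite Rabs_pos_eq by auto. nra.
Qed.

Lemma contradiction : False.
Proof.
  pose proof (hmerge Q Q_fap Q_ac (1/8) ltac:(lra)) as Hm.
  assert (Hbad : forall t, Q (bad_set Sigma P Q (1/8) t) = 1).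
  { intros t. apply (Q_one _ t). intros w HGw Hw.
    assert (Hc : cyl w t = cyl om t) by (apply cyl_ext; auto).
    unfold bad_set. rewrite Hc. split.
    - rewrite (Q_one (cyl om t) t) by auto. lra.
    - right. exists G. split; auto. unfold cond. rewrite Hc.
      rewrite (Q_one (cyl om t) t) by auto.
      rewrite (Q_one (inter G (cyl om t)) t) by (intros; split; auto).
      pose proof (delta_le t) as Hd.
      assert (Hr : P (inter G (cyl om t)) <= P G).
      { apply (fap_mono Sigma hS P hfap); auto. apply (sig_inter Sigma hS); auto. intros v [H _]; auto. }
      assert (Hr0 : 0 <= P (inter G (cyl om t))).
      { destruct hfap as [_ [hN _]]; apply hN, sig_inter; auto. }
      set (r := P (inter G (cyl om t))) in *. set (p := P (cyl om t)) in *.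
      set (q := r / p).
      assert (Hq : q * p = r) by (unfold q; field; lra).
      assert (q <= 3/4) by nra.
      replace (1/1) with 1 by field.
      rewrite Rabs_left by lra. lra. }
  destruct (Hm (1/2)) as [N HN]; [lra|].
  specialize (HN N (le_n N)). rewrite Hbad in HN. unfold R_dist in HN.
  rewrite Rminus_0_r, Rabs_R1 in HN. lra.
Qed.
End Main.

Theorem theorem9 (Sigma : event -> Prop)
  (hSigma : is_sigma_algebra Sigma) (hcyl : contains_cylinders Sigma)
  (P : event -> R) (hP : Delta_BD Sigma P) (eps : R) (heps : eps > 0) :
  exists (n : nat) (C : nat -> event),
    (forall i, (i < n)%nat -> is_cylinder (C i)) /\
    (forall i j, (i < n)%nat -> (j < n)%nat -> i <> j -> disjoint (C i) (C j)) /\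
    (forall w, exists i, (i < n)%nat /\ C i w) /\
    (forall i, (i < n)%nat -> P (C i) <= eps).
Proof.
  destruct hP as [hfap [hsn hmerge]].
  destruct (classic (exists N, forall w, P (cyl w N) <= eps)) as [[N HN]|Hno].
  - apply (partition_exists P eps N HN).
  - exfalso.
    assert (Hh : forall N, exists w, P (cyl w N) > eps).
    { intros N. apply NNPP; intros Hn. apply Hno. exists N. intros w.
      apply Rnot_lt_le. intros Hl. apply Hn. exists w. lra. }
    assert (Hmono : forall w t N, (t <= N)%nat -> P (cyl w N) <= P (cyl w t)).
    { intros w t N Ht. apply (fap_mono Sigma hSigma P hfap); auto. apply cyl_mono; auto. }
    destruct (konig P eps Hmono Hh) as [om Hom].
    destruct (dec_conv (fun t => P (cyl om t))) as [delta Hd].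
    + intros n; apply Hmono; lia.
    + intros n; destruct hfap as [_ [hN _]]; apply hN; auto.
    + assert (Hdp : eps <= delta).
      { apply (lim_ge _ _ _ 0%nat Hd). intros n _. left; apply Hom. }
      destruct (Hd (delta / 2)) as [t1 Ht1]; [lra|].
      specialize (Ht1 t1 (le_n t1)). unfold R_dist in Ht1. apply Rabs_def2 in Ht1.
      destruct (hsn (cyl om t1) (hcyl _ _) (1/2) ltac:(lra)) as [G [HG [HGs HGP]]].
      apply (contradiction Sigma hSigma hcyl P hfap om G t1 delta Hd ltac:(lra)
        ltac:(lra) HG HGs HGP hmerge).
Qed.
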